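(* Let $\Delta=\{x\in\mathbb{R}^n:\ \ell_i(x)\ge0,\ i=1,\dots,d\}$ be a compact $n$-dimensional Delzant polytope with lattice distances $\ell_i(x)=c_i-\langle u_i,x\rangle$ to its facets, and for $x,y\in\Delta$ let $e^{N\varphi(x,y)}=\prod_{i=1}^d\ell_i(y)^{N\ell_i(x)}e^{-N\ell_i(y)}$ (with $0^0=1$), i.e. $\varphi(x,y)=\sum_i\ell_i(x)\log\ell_i(y)-\ell_i(y)$. Let $f,g\in C^\infty(\Delta)$ and $x\in\Delta$ with $f(x)\neq0$ and $x\notin\operatorname{supp}g$. Then there is a constant $c>0$ such that, for all sufficiently large $N$, $$\Big|\int_\Delta e^{N\varphi(x,y)}g(y)\,dy\Big|\le e^{-cN}\Big|\int_\Delta e^{N\varphi(x,y)}f(y)\,dy\Big|.$$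
   Context: A Delzant polytope is a compact convex polytope $\{x:\langle u_i,x\rangle\le c_i\}$ with $u_i\in(\mathbb{Z}^n)^*$ primitive outward facet normals, $c_i\in\mathbb{Z}$, each vertex lying on exactly $n$ facets whose normals form a $\mathbb{Z}$-basis. $dy$ is Lebesgue measure. *)

(* Defs.v *)
From HB Require Import structures.
From mathcomp Require Import all_boot all_order all_algebra.
From mathcomp Require Import all_classical all_reals all_analysis.
Set Implicit Arguments. Unset Strict Implicit. Unset Printing Implicit Defensive.
Import Order.TTheory GRing.Theory Num.Theory.
Import numFieldNormedType.Exports.
Local Open Scope classical_set_scope.
Local Open Scope ring_scope.

Section Delzant.
Variable R : realType.

(* points of R^n are row vectors 'rV[R]_n; coordinate j of y is y ord0 j *)

Definition pairing (n : nat) (u : 'I_n -> int) (y : 'rV[R]_n) : R :=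
  \sum_(j < n) (u j)%:~R * y ord0 j.

Definition ldist (n d : nat) (u : 'I_d -> 'I_n -> int) (c : 'I_d -> int)
  (i : 'I_d) (y : 'rV[R]_n) : R := (c i)%:~R - pairing (u i) y.

Definition polytope (n d : nat) (u : 'I_d -> 'I_n -> int) (c : 'I_d -> int)
  : set 'rV[R]_n := [set y | forall i, 0 <= ldist u c i y].

Definition is_vertex (n : nat) (D : set 'rV[R]_n) (v : 'rV[R]_n) : Prop :=
  D v /\ forall (a b : 'rV[R]_n) (t : R), D a -> D b -> 0 < t < 1 ->
    v = t *: a + (1 - t) *: b -> a = b.

Definition primitive (n : nat) (w : 'I_n -> int) : Prop :=
  forall (k : int) (w' : 'I_n -> int), (forall j, w j = k * w' j) -> `|k| = 1.

Definition Zbasis (n : nat) (w : 'I_n -> 'I_n -> int) : Prop :=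
  (forall z : 'I_n -> int, exists k : 'I_n -> int,
      forall j, z j = \sum_(a < n) k a * w a j) /\
  (forall k : 'I_n -> int, (forall j, \sum_(a < n) k a * w a j = 0) ->
      forall a, k a = 0).

Definition Delzant (n d : nat) (u : 'I_d -> 'I_n -> int) (c : 'I_d -> int)
  : Prop :=
  let D := polytope u c in
  [/\ compact D,
      (* n-dimensional: nonempty interior *)
      exists y, forall i, 0 < ldist u c i y,
      forall i, primitive (u i),
      (* each inequality defines a facet (irredundant description) *)
      forall i, exists y, ldist u c i y = 0 /\
                  forall i', i' != i -> 0 < ldist u c i' y &
      forall v, is_vertex D v ->
        exists e : 'I_n -> 'I_d, [/\ injective e,
          forall i, ldist u c i v = 0 <-> exists a, e a = i &
          Zbasis (fun a => u (e a))]].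

(* smoothness: C^k on R^n via iterated directional derivatives *)
Fixpoint Ck (n : nat) (k : nat) (F : 'rV[R]_n -> R) : Prop :=
  match k with
  | 0 => continuous F
  | k'.+1 => (forall a v, derivable F a v) /\ forall v, Ck k' ('D_v F)
  end.

(* f in C^oo(D): f is the restriction to D of a smooth function on R^n *)
Definition smooth_on (n : nat) (D : set 'rV[R]_n) (f : 'rV[R]_n -> R) : Prop :=
  exists F : 'rV[R]_n -> R, (forall k, Ck k F) /\ forall y, D y -> F y = f y.

Definition supp_on (n : nat) (D : set 'rV[R]_n) (g : 'rV[R]_n -> R)
  : set 'rV[R]_n := closure [set y | D y /\ g y != 0].

(* Lebesgue integral over R^n, computed as an iterated integral of
   one-dimensional Lebesgue integrals (Fubini) *)
Fixpoint iint (n : nat) : ('rV[R]_n -> R) -> R :=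
  match n return ('rV[R]_n -> R) -> R with
  | 0 => fun h => h 0
  | m.+1 => fun h => Rintegral (@lebesgue_measure R) setT
      (fun t : R => iint (fun y : 'rV[R]_m =>
          h (row_mx (const_mx t : 'rV[R]_1) y : 'rV[R]_(m.+1))))
  end.

Definition int_on (n : nat) (D : set 'rV[R]_n) (h : 'rV[R]_n -> R) : R :=
  iint (fun y => \1_D y * h y).

(* e^{N phi(x,y)} = prod_i l_i(y)^{N l_i(x)} e^{-N l_i(y)}, with 0^0 = 1 *)
Definition weight (n d : nat) (u : 'I_d -> 'I_n -> int) (c : 'I_d -> int)
  (N : nat) (x y : 'rV[R]_n) : R :=
  \prod_(i < d) (ldist u c i y `^ (N%:R * ldist u c i x)
                 * expR (- (N%:R * ldist u c i y))).

End Delzant.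

Arguments polytope R {n d} u c _.

(* Main.v *)
Require Import Defs.
From HB Require Import structures.
From mathcomp Require Import all_boot all_order all_algebra.
From mathcomp Require Import all_classical all_reals all_analysis.
From mathcomp Require Import lra ring.
Set Implicit Arguments. Unset Strict Implicit. Unset Printing Implicit Defensive.
Import Order.TTheory GRing.Theory Num.Theory.
Import numFieldNormedType.Exports.
Local Open Scope classical_set_scope.
Local Open Scope ring_scope.
Section I1.
Variable R : realType.
Local Notation mu := (@lebesgue_measure R).

Lemma int_mono (f1 f2 : R -> \bar R) : (forall x, 0 <= f1 x)%E ->
  (forall x, f1 x <= f2 x)%E -> (\int[mu]_x f1 x <= \int[mu]_x f2 x)%E.
Proof.
move=> f10 f12.
have f20 : forall x, (0 <= f2 x)%E by move=> x; exact: le_trans (f10 x) (f12 x).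
rewrite !ge0_integralTE//.
apply: ge_ereal_sup => _ [h hf <-]; apply: ereal_sup_ubound; exists h => //.
by move=> x; exact: le_trans (hf x) (f12 x).
Qed.

Lemma int_cst_ball (k q r : R) : 0 <= k -> 0 <= r ->
  (\int[mu]_x (k * \1_(ball q r) x)%:E = (k * (r *+ 2))%:E)%E.
Proof.
move=> k0 r0.
under eq_integral do rewrite EFinM.
rewrite (ge0_integralZl_EFin _ measurableT _ _ k0); first last.
- by apply/measurable_realfun.measurable_EFinP; apply: measurable_realfun.measurable_indic; exact: measurable_realfun.measurable_ball.
- by move=> x _; rewrite lee_fin.
rewrite (integral_indic _ measurableT); last exact: measurable_realfun.measurable_ball.
rewrite setIT.
rewrite EFinM; congr (_ * _)%E; exact: lebesgue_measure_ball.

Qed.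
End I1.
Section I2.
Variable R : realType.
Local Notation mu := (@lebesgue_measure R).

Lemma R1 (g : R -> R) (q r b s a be k : R) : 0 <= r -> 0 <= s -> 0 <= be ->
  (forall t, ~ ball b s t -> g t = 0) ->
  (forall t, - be <= g t) -> (forall t, `|g t| <= k) ->
  (forall t, ball q r t -> a <= g t) ->
  [/\ a * (r *+ 2) - be * (s *+ 2) <= Rintegral mu setT g,
      - (be * (s *+ 2)) <= Rintegral mu setT g &
      `|Rintegral mu setT g| <= k * (s *+ 2)].
Proof.
move=> r0 s0 be0 gJ glo gup gI.
have k0 : 0 <= k by apply: le_trans (gup 0).
rewrite /Rintegral integralE.
set F := (fun x => (g x)%:E).
have Apos : (0 <= \int[mu]_x F^\+ x)%E.
  by apply: integral_ge0 => x _; rewrite funeposE le_max lexx orbT.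
have Bpos : (0 <= \int[mu]_x F^\- x)%E.
  by apply: integral_ge0 => x _; rewrite funenegE le_max lexx orbT.
have Aup : (\int[mu]_x F^\+ x <= (k * (s *+ 2))%:E)%E.
  rewrite -(@int_cst_ball _ k b s k0 s0); apply: int_mono => x.
    by rewrite funeposE le_max lexx orbT.
  rewrite funeposE /F indicE; have [Jx|Jx] := pselect (ball b s x).
    rewrite mem_set// mulr1 ge_max !lee_fin k0 andbT.
    exact: le_trans (ler_norm _) (gup x).
  by rewrite memNset// mulr0 gJ// maxxx.
have Bup : forall c, 0 <= c -> (forall x, - c <= g x) ->
    (\int[mu]_x F^\- x <= (c * (s *+ 2))%:E)%E.
  move=> c c0 gc.
  rewrite -(@int_cst_ball _ c b s c0 s0); apply: int_mono => x.
    by rewrite funenegE le_max lexx orbT.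
  rewrite funenegE /F indicE; have [Jx|Jx] := pselect (ball b s x).
    by rewrite mem_set// mulr1 ge_max !lee_fin c0 andbT lerNl.
  by rewrite memNset// mulr0 gJ// oppe0 maxxx.
have Bup1 := Bup be be0 glo.
have Bup2 : (\int[mu]_x F^\- x <= (k * (s *+ 2))%:E)%E.
  by apply: Bup k0 _ => x; have := gup x; rewrite ler_norml => /andP[].
have Alo : ((Num.max a 0 * (r *+ 2))%:E <= \int[mu]_x F^\+ x)%E.
  rewrite -(@int_cst_ball _ _ q r _ r0) ?le_max ?lexx ?orbT//; apply: int_mono => x.
    by rewrite lee_fin mulr_ge0// ?le_max ?lexx ?orbT.
  rewrite funeposE /F indicE; have [Ix|Ix] := pselect (ball q r x).
    rewrite mem_set// mulr1 -EFin_max lee_fin.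
    by rewrite ge_max le_max (gI x Ix) le_max lexx !orbT.
  by rewrite memNset// mulr0 le_max lexx orbT.
move: Apos Aup Alo; case: (\int[mu]_x F^\+ x)%E => [A| |] //= A0 AU AL.
move: Bpos Bup1 Bup2; case: (\int[mu]_x F^\- x)%E => [B| |] //= B0 BU BU2.
rewrite !lee_fin in A0 AU AL B0 BU BU2 *.
have s2 : 0 <= s *+ 2 by rewrite mulrn_wge0.
have r2 : 0 <= r *+ 2 by rewrite mulrn_wge0.
have : a * (r *+ 2) <= Num.max a 0 * (r *+ 2).
  by rewrite ler_wpM2r// le_max lexx.
move=> h; split.
- lra.
- lra.
- rewrite ler_norml; apply/andP; split.
  + lra.
  + lra.
Qed.
End I2.
Section C.
Variable R : realType.
Definition cube n (q : 'rV[R]_n) (r : R) (y : 'rV[R]_n) : Prop :=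
  forall j, ball (q ord0 j) r (y ord0 j).

Lemma cube_row m (z : 'rV[R]_(1 + m)) r t (y : 'rV[R]_m) :
  cube z r (row_mx (const_mx t) y) <->
  ball (z ord0 ord0) r t /\ cube (rsubmx z) r y.
Proof.
have E : lshift m ord0 = ord0 :> 'I_(1 + m) by apply: val_inj.
split.
- move=> h; split.
    by have := h (lshift m ord0); rewrite row_mxEl mxE E.
  by move=> j; have := h (rshift 1 j); rewrite row_mxEr mxE.
- move=> [h1 h2] j; case: (splitP j) => [j0 Hj|j1 Hj].
    have -> : j = lshift m j0 by apply: val_inj.
    by rewrite row_mxEl mxE (ord1 j0) E.
  have -> : j = rshift 1 j1 by apply: val_inj.
  by rewrite row_mxEr; have := h2 j1; rewrite mxE.
Qed.
End C.
Section Ind.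
Variable R : realType.
Fixpoint cc (n : nat) (a b : R) : R :=
  match n with 0 => 0 | m.+1 => cc m a b * a + b ^+ m.+1 end.

Lemma iint_bound n (h : 'rV[R]_n -> R) (q b : 'rV[R]_n) (r s m e K : R) :
  0 <= r -> 0 <= s -> 0 <= e ->
  (forall y, ~ cube b s y -> h y = 0) -> (forall y, - e <= h y) ->
  (forall y, `|h y| <= K) -> (forall y, cube q r y -> m <= h y) ->
  [/\ m * (r *+ 2) ^+ n - e * cc n (r *+ 2) (s *+ 2) <= iint h,
      - (e * (s *+ 2) ^+ n) <= iint h &
      `|iint h| <= K * (s *+ 2) ^+ n].
Proof.
elim: n h q b m e K => [|n IH] h q b m e K r0 s0 e0 hB hlo hup hQ.
  rewrite /= !expr0 !mulr1 mulr0 subr0; split => //.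
  by apply: (hQ) => -[].
pose g t := iint (fun y : 'rV[R]_n =>
  h (row_mx (const_mx t : 'rV[R]_1) y : 'rV[R]_(n.+1))).
have -> : iint h = Rintegral (@lebesgue_measure R) setT g by [].
pose q' := rsubmx (q : 'rV[R]_(1 + n)).
pose b' := rsubmx (b : 'rV[R]_(1 + n)).
pose h_ t := (fun y : 'rV[R]_n =>
  h (row_mx (const_mx t : 'rV[R]_1) y : 'rV[R]_(n.+1))).
have IHt t := IH (h_ t) q' b'.
have s2 : 0 <= s *+ 2 by rewrite mulrn_wge0.
have r2 : 0 <= r *+ 2 by rewrite mulrn_wge0.
have e' : 0 <= e * (s *+ 2) ^+ n by rewrite mulr_ge0// exprn_ge0.
have hB' t y : ~ cube b' s y -> h_ t y = 0.
  by move=> nc; apply: (hB) => /cube_row [_ ?].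
have := R1 (g := g) (q := q ord0 ord0) (r := r) (b := b ord0 ord0) (s := s)
  (a := m * (r *+ 2) ^+ n - e * cc n (r *+ 2) (s *+ 2))
  (be := e * (s *+ 2) ^+ n) (k := K * (s *+ 2) ^+ n) r0 s0 e'.
move=> R1'; have [] := R1'.
- move=> t nt; apply/eqP; rewrite -normr_le0.
  have h0 : forall y, `|h_ t y| <= 0.
    move=> y; rewrite normr_le0; apply/eqP; apply: (hB) => /cube_row [] //.
  have [_ _] := IHt t (- e) e 0 r0 s0 e0 (hB' t) (fun y => hlo _) h0 (fun y _ => hlo _).
  by rewrite mul0r.
- by move=> t; have [] := IHt t (- e) e K r0 s0 e0 (hB' t) (fun y => hlo _)
    (fun y => hup _) (fun y _ => hlo _).
- by move=> t; have [] := IHt t (- e) e K r0 s0 e0 (hB' t) (fun y => hlo _)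
    (fun y => hup _) (fun y _ => hlo _).
- move=> t tI; have [] := IHt t m e K r0 s0 e0 (hB' t) (fun y => hlo _)
    (fun y => hup _) _ => //.
  by move=> y yQ; apply: (hQ); apply/cube_row.
move=> H1 H2 H3; split.
- apply: le_trans H1; rewrite /= !exprSr le_eqVlt; apply/orP; left.
  by apply/eqP; ring.
- by rewrite exprSr mulrA.
- by rewrite exprSr mulrA.
Qed.
End Ind.
Section H.
Variable R : realType.
Local Notation V n := ('rV[R]_n).

Lemma cont_sum n (I : finType) (F : I -> V n -> R) :
  (forall i, continuous (F i)) -> continuous (fun y => \sum_i F i y).
Proof.
move=> Fc; rewrite unlock /=; elim: (index_enum I) => [|i s IH] /=.
  exact: cst_continuous.
move=> y; exact: (continuousD (Fc i y) (IH y)).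
Qed.

Lemma cont_prod n (I : finType) (F : I -> V n -> R) :
  (forall i, continuous (F i)) -> continuous (fun y => \prod_i F i y).
Proof.
move=> Fc; rewrite unlock /=; elim: (index_enum I) => [|i s IH] /=.
  exact: cst_continuous.
move=> y; exact: (continuousM (Fc i y) (IH y)).
Qed.

Lemma pairing_cont n (w : 'I_n -> int) : continuous (@pairing R n w).
Proof.
rewrite /pairing; apply: cont_sum => j y.
have h1 := @coord_continuous R 1 n ord0 j y.
have FF : Filter (nbhs y) by exact: nbhs_filter.
exact: (@cvgM _ _ _ FF _ _ _ _ (@cvg_cst _ ((w j)%:~R : R) _ (nbhs y) FF) h1).
Qed.

Lemma ldist_cont n d (u : 'I_d -> 'I_n -> int) c i :
  continuous (@ldist R n d u c i).
Proof.
move=> y; rewrite /ldist.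
have FF : Filter (nbhs y) by exact: nbhs_filter.
exact: (cvgD (cvg_cst _) (cvgN (@pairing_cont n (u i) y))).
Qed.

Lemma pairing_lin n (w : 'I_n -> int) (a b : R) (y z : V n) :
  pairing w (a *: y + b *: z) = a * pairing w y + b * pairing w z.
Proof.
rewrite /pairing !mulr_sumr -big_split /=; apply: eq_bigr => j _.
rewrite !mxE; ring.
Qed.

Lemma ldist_aff n d (u : 'I_d -> 'I_n -> int) c i (a : R) (y z : V n) :
  ldist u c i ((1 - a) *: y + a *: z) =
  (1 - a) * ldist u c i y + a * ldist u c i z.
Proof. rewrite /ldist pairing_lin; ring. Qed.

Lemma ldist_dir n d (u : 'I_d -> 'I_n -> int) c i (t : R) (y v : V n) :
  pairing (u i) v = 0 -> ldist u c i (y + t *: v) = ldist u c i y.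
Proof.
move=> h; rewrite /ldist -{1}[y]scale1r pairing_lin h mul1r mulr0 addr0.
by [].
Qed.

Lemma cube_ball n (q y : V n) (r : R) : 0 < r -> cube q r y <-> ball q r y.
Proof.
move=> r0; split.
  by move=> h; split => // i j; rewrite (ord1 i); exact: h.
by case=> _ h j; exact: h.
Qed.
End H.
Section P.
Variable R : realType.
Lemma near_pos (t0 : R) : 0 < t0 -> \forall t \near t0, 0 < t.
Proof.
move=> t0p; apply/nbhs_ballP; exists t0 => //= t.
rewrite -ball_normE /= ltr_norml => /andP[h1 h2]; lra.
Qed.
Lemma near_neg (t0 : R) : t0 < 0 -> \forall t \near t0, t < 0.
Proof.
move=> t0p; apply/nbhs_ballP; exists (- t0); first by rewrite /= oppr_gt0.
move=> t; rewrite -ball_normE /= ltr_norml => /andP[h1 h2]; lra.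
Qed.

Lemma powRE (t a : R) : 0 < t -> t `^ a = expR (a * ln t).
Proof. by move=> tp; rewrite /powR gt_eqF. Qed.

Lemma pcont (a : R) : 0 <= a -> continuous (fun t : R => (Num.max t 0) `^ a).
Proof.
move=> a0 t0.
have [->|aN0] := eqVneq a 0.
  rewrite (_ : (fun t : R => _) = cst 1); first exact: cst_continuous.
  by apply/funext => t; rewrite powRr0.
have ap : 0 < a by rewrite lt_def aN0.
case: (ltgtP t0 0) => [t0n|t0p|->].
- apply: (cvg_trans (near_eq_cvg (f := cst ((Num.max t0 0) `^ a)) _)).
    near=> t.
    have tn : t < 0 by near: t; exact: near_neg.
    by rewrite /= !max_r ?ltW.
  exact: cvg_cst.
- apply: (cvg_trans (near_eq_cvg (f := fun t => expR (a * ln t)) _)).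
    near=> t.
    have tp : 0 < t by near: t; exact: near_pos.
    by rewrite /= max_l ?powRE// ltW.
  rewrite /= max_l ?powRE// ?ltW//.
  apply: (@continuous_comp _ _ _ (fun t => a * ln t) expR t0); last exact: continuous_expR.
  apply: cvgM; first exact: cvg_cst.
  exact: continuous_ln.
  rewrite /continuous_at /= maxxx powR0//; apply/cvgrPdist_lt => e e0.
  apply/nbhs_ballP; exists (expR (ln e / a)); first by rewrite /= expR_gt0.
  move=> t; rewrite /= sub0r normrN => ht.
  have [tp|tn] := ltP 0 t.
    rewrite sub0r normrN ger0_norm ?powR_ge0//.
    have -> : e = (expR (ln e / a)) `^ a.
      by rewrite powRE ?expR_gt0// expRK mulrC divfK// lnK.
    apply: gt0_ltr_powR => //; rewrite ?inE ?nnegrE ?ltW ?expR_gt0//.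
    by apply: le_lt_trans ht; rewrite ler_norm.
  by rewrite powR0// subrr normr0.
Unshelve. all: by end_near. Qed.
End P.
Section F.
Variable R : realType.
Lemma factor_lt (a t : R) : 0 <= a -> 0 <= t -> t != a ->
  t `^ a * expR (- t) < a `^ a * expR (- a).
Proof.
move=> a0 t0 ta.
have [a00|aN0] := eqVneq a 0.
  rewrite a00 in ta *.
  by rewrite !powRr0 !mul1r oppr0 expR0 expR_lt1 oppr_lt0 lt_def ta t0.
have ap : 0 < a by rewrite lt_def aN0.
have [->|tN0] := eqVneq t 0.
  by rewrite powR0// mul0r mulr_gt0// ?expR_gt0// powR_gt0.
have tp : 0 < t by rewrite lt_def tN0.
rewrite !powRE// -!expRD ltr_expR.
set w := ln t - ln a.
have ew : expR w = t / a by rewrite expRB !lnK ?posrE.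
have wN0 : w != 0.
  apply: contra ta; rewrite subr_eq0 => /eqP h.
  by apply/eqP; apply: ln_inj; rewrite ?posrE.
have := expR_gt1Dx wN0; rewrite ew ltr_pdivlMr// mulrDl mul1r (mulrC w) => h.
have : a * w < t - a by lra.
rewrite /w mulrBr; lra.
Qed.

Lemma factor_le (a t : R) : 0 <= a -> 0 <= t ->
  t `^ a * expR (- t) <= a `^ a * expR (- a).
Proof.
move=> a0 t0; have [->|ta] := eqVneq t a; first by [].
exact/ltW/factor_lt.
Qed.

Lemma factor_gt0 (a : R) : 0 <= a -> 0 < a `^ a * expR (- a).
Proof.
move=> a0; apply: mulr_gt0; last exact: expR_gt0.
have [->|aN0] := eqVneq a 0; first by rewrite powRr0.
by apply: powR_gt0; rewrite lt_def aN0.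
Qed.
End F.
Section G.
Variable R : realType.
Local Notation V n := ('rV[R]_n).

Lemma compact_in_ball n (A : set (V n)) (x0 : V n) : compact A ->
  exists2 S, 0 < S & forall y, A y -> ball x0 S y.
Proof.
move=> cA; have [M [_ HM]] := compact_bounded cA.
have HM1 : globally A [set y | `|y| <= `|M| + 1].
  by apply: HM; apply: le_lt_trans (ler_norm _) _; rewrite ltrDl.
exists (`|x0| + `|M| + 2); first by rewrite -addrA ltr_wpDl.
move=> y Ay; rewrite -ball_normE /=.
have := HM1 y Ay; rewrite /= => hy.
apply: le_lt_trans (ler_normB _ _) _; lra.
Qed.

Lemma span n d (u : 'I_d -> 'I_n -> int) c (x v : V n) :
  compact (polytope R u c) -> polytope R u c x ->
  (forall i, pairing (u i) v = 0) -> v = 0.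
Proof.
move=> cD Dx hv; apply/eqP/negPn/negP => vN0.
have [S S0 HS] := compact_in_ball x cD.
have nv : 0 < `|v| by rewrite normr_gt0.
pose y := x + (S / `|v|) *: v.
have Dy : polytope R u c y by move=> i; rewrite /y ldist_dir//; exact: Dx.
have := HS y Dy; rewrite -ball_normE /= /y opprD addrA subrr add0r normrN normrZ.
by rewrite ger0_norm ?divr_ge0 ?ltW// divfK ?gt_eqF// ltxx.
Qed.

Definition Psi n d (u : 'I_d -> 'I_n -> int) c (x y : V n) : R :=
  \prod_i ((Num.max (ldist u c i y) 0) `^ (ldist u c i x) * expR (- ldist u c i y)).

Lemma Psi_ge0 n d (u : 'I_d -> 'I_n -> int) c (x y : V n) : 0 <= Psi u c x y.
Proof.
by apply: prodr_ge0 => i _; rewrite mulr_ge0 ?powR_ge0 ?expR_ge0.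
Qed.

Lemma Psi_cont n d (u : 'I_d -> 'I_n -> int) c (x : V n) :
  polytope R u c x -> continuous (Psi u c x).
Proof.
move=> Dx; apply: cont_prod => i y.
have FF : Filter (nbhs y) by exact: nbhs_filter.
apply: cvgM.
  apply: (@continuous_comp _ _ _ (ldist u c i) (fun t => (Num.max t 0) `^ (ldist u c i x))).
    exact: ldist_cont.
  exact: pcont.
apply: (@continuous_comp _ _ _ (fun y => - ldist u c i y) expR); last exact: continuous_expR.
exact: (cvgN (@ldist_cont R n d u c i y)).
Qed.

Lemma weightE n d (u : 'I_d -> 'I_n -> int) c N (x y : V n) :
  polytope R u c y -> weight u c N x y = Psi u c x y ^+ N.
Proof.
move=> Dy; rewrite /weight /Psi -prodrXl; apply: eq_bigr => i _.
rewrite exprMn max_l ?Dy// (mulrC N%:R) powRrM powR_mulrn ?powR_ge0//.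
by rewrite -mulrN expRM_natl.
Qed.

Lemma Psi_xx n d (u : 'I_d -> 'I_n -> int) c (x : V n) : polytope R u c x ->
  Psi u c x x = \prod_i (ldist u c i x `^ ldist u c i x * expR (- ldist u c i x)).
Proof. by move=> Dx; apply: eq_bigr => i _; rewrite max_l ?Dx. Qed.

Lemma Psi_x_gt0 n d (u : 'I_d -> 'I_n -> int) c (x : V n) : polytope R u c x ->
  0 < Psi u c x x.
Proof.
by move=> Dx; rewrite Psi_xx//; apply: prodr_gt0 => i _; exact: factor_gt0.
Qed.

Lemma Psi_le n d (u : 'I_d -> 'I_n -> int) c (x y : V n) : polytope R u c x ->
  polytope R u c y -> Psi u c x y <= Psi u c x x.
Proof.
move=> Dx Dy; rewrite Psi_xx//; apply: ler_prod => i _.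
rewrite mulr_ge0 ?powR_ge0 ?expR_ge0//= max_l ?Dy//; exact: factor_le.
Qed.

Lemma Psi_lt n d (u : 'I_d -> 'I_n -> int) c (x y : V n) :
  compact (polytope R u c) -> polytope R u c x ->
  polytope R u c y -> y != x -> Psi u c x y < Psi u c x x.
Proof.
move=> cD Dx Dy yx.
have [i li] : exists i, ldist u c i y != ldist u c i x.
  apply: contrapT => h.
  have e : forall i, ldist u c i y = ldist u c i x.
    by move=> i; apply/eqP/negPn/negP => ne; apply: h; exists i.
  move/negP: yx; apply; rewrite -subr_eq0; apply/eqP.
  apply: (span cD Dx) => i.
  have : pairing (u i) y = pairing (u i) x by have := e i; rewrite /ldist; lra.
  have -> : y - x = 1 *: y + (-1) *: x by rewrite scale1r scaleN1r.
  by rewrite pairing_lin => ->; ring.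
rewrite Psi_xx// /Psi (bigD1 i)//= [X in _ < X](bigD1 i)//=.
set A := \prod_(j | j != i) _; set B := \prod_(j | j != i) _.
have A0 : 0 <= A by apply: prodr_ge0 => j _; rewrite mulr_ge0 ?powR_ge0 ?expR_ge0.
have AB : A <= B.
  apply: ler_prod => j _; rewrite mulr_ge0 ?powR_ge0 ?expR_ge0//= max_l ?Dy//.
  exact: factor_le.
have B0 : 0 < B by apply: prodr_gt0 => j _; exact: factor_gt0.
rewrite max_l ?Dy//.
apply: (le_lt_trans (y := (ldist u c i y `^ ldist u c i x * expR (- ldist u c i y)) * B)).
  by rewrite ler_wpM2l// mulr_ge0 ?powR_ge0 ?expR_ge0.
by rewrite ltr_pM2r// factor_lt.
Qed.
End G.
Section L.
Variable R : realType.
Local Notation V n := ('rV[R]_n).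

Lemma supp_vanish n (D : set (V n)) (g : V n -> R) (x : V n) :
  ~ supp_on D g x -> exists2 r, 0 < r & forall y, D y -> ball x r y -> g y = 0.
Proof.
move=> ns; apply: contrapT => h; apply: ns.
rewrite /supp_on closureEnbhs /= => P B AP /nbhs_ballP [r r0 rB].
apply: contrapT => hPB; apply: h; exists r => // y Dy xy.
apply: contrapT => gy; apply: hPB; exists y; split; last exact: rB.
by apply: AP; split => //; apply/eqP.
Qed.

Lemma near_gt n (F : V n -> R) (x : V n) (a : R) :
  {for x, continuous F} -> a < F x -> \forall y \near x, a < F y.
Proof.
move=> Fc aF; have /cvgrPdist_lt /(_ (F x - a)) := Fc.
rewrite subr_gt0 => /(_ aF); apply: filterS => y.
rewrite ltr_norml => /andP[_ h]; lra.
Qed.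

Lemma ball_gt n (F : V n -> R) (x : V n) (a : R) :
  {for x, continuous F} -> a < F x -> exists2 r, 0 < r & forall y, ball x r y -> a < F y.
Proof.
by move=> Fc aF; have /nbhs_ballP [r r0 h] := near_gt Fc aF; exists r.
Qed.

Lemma bound_on n (A : set (V n)) (G : V n -> R) : compact A -> continuous G ->
  exists K, forall y, A y -> `|G y| <= K.
Proof.
move=> cA Gc.
case: (pselect (A !=set0)) => [[y0 Ay0]|A0]; last first.
  by exists 0 => y Ay; exfalso; apply: A0; exists y.
have [] := @EVT_max_rV R n (fun y => `|G y|) A _ cA _.
- by exists y0.
- apply: continuous_subspaceT => y.
  exact: (@continuous_comp _ _ _ G Num.Def.normr y (Gc y) (@norm_continuous _ R^o _)).
move=> c _ hc; exists `|G c| => y Ay; apply: hc; rewrite inE; exact: Ay.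
Qed.

Lemma Psi_gap n d (u : 'I_d -> 'I_n -> int) c (x : V n) (r : R) :
  compact (polytope R u c) -> polytope R u c x -> 0 < r ->
  exists2 th, 0 <= th < 1 & forall y, polytope R u c y -> ~ ball x r y ->
    Psi u c x y <= th * Psi u c x x.
Proof.
move=> cD Dx r0.
set K := polytope R u c `&` ~` ball x r.
have cK : compact K.
  by apply: compact_closedI => //; apply: open_closedC; exact: ball_open.
have P0 := Psi_x_gt0 Dx.
case: (pselect (K !=set0)) => [[y0 Ky0]|K0]; last first.
  exists 0; first by rewrite lexx ltr01.
  by move=> y Dy ny; exfalso; apply: K0; exists y.
have [] := @EVT_max_rV R n (Psi u c x) K _ cK _.
- by exists y0.
- by apply: continuous_subspaceT; exact: Psi_cont.
move=> z; rewrite inE => -[Dz nz] hz.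
have zx : z != x.
  by apply/eqP => zx; apply: nz; rewrite zx; exact: ballxx.
have lt := Psi_lt cD Dx Dz zx.
exists (Psi u c x z / Psi u c x x).
  by rewrite divr_ge0 ?Psi_ge0 ?ltW//= ltr_pdivrMr// mul1r.
move=> y Dy ny; rewrite divfK ?gt_eqF//; apply: hz; rewrite inE; by split.
Qed.

Lemma inner_ball n d (u : 'I_d -> 'I_n -> int) c (x y0 : V n) (r : R) :
  polytope R u c x -> (forall i, 0 < ldist u c i y0) -> 0 < r ->
  exists q : V n, exists2 rho, 0 < rho &
    forall y, ball q rho y -> polytope R u c y /\ ball x r y.
Proof.
move=> Dx hy0 r0.
set e := r / (r + `|x - y0|).
have den : 0 < r + `|x - y0| by rewrite ltr_wpDr.
have e0 : 0 < e by rewrite divr_gt0.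
have e1 : e <= 1 by rewrite ler_pdivrMr// mul1r lerDl.
have e1' : e * `|x - y0| < r.
  rewrite /e mulrAC ltr_pdivrMr// ltr_pM2l// ltrDr//.
pose q := (1 - e) *: x + e *: y0.
have qi : forall i, 0 < ldist u c i q.
  move=> i; rewrite /q ldist_aff.
  apply: ltr_wpDl; last by rewrite mulr_gt0.
  by rewrite mulr_ge0 ?Dx// subr_ge0.
have qx : ball x r q.
  rewrite -ball_normE /= /q.
  have -> : x - ((1 - e) *: x + e *: y0) = e *: (x - y0).
    by rewrite scalerBl scale1r scalerBr opprD opprB addrA addrCA subrr addr0.
  by rewrite normrZ ger0_norm ?ltW.
have : \forall y \near q, (forall i, 0 < ldist u c i y) /\ ball x r y.
  near=> y; split.
    near: y; apply: filter_forall => i.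
    exact: near_gt (@ldist_cont R n d u c i q) (qi i).
  near: y; exact: (ball_open x r q qx).
move=> /nbhs_ballP [rho rho0 h]; exists q, rho => // y /h [h1 h2]; split => //.
by move=> i; exact/ltW/h1.
Unshelve. all: by end_near. Qed.
End L.
Section M1.
Variable R : realType.
Local Notation V n := ('rV[R]_n).

Lemma Rint_opp (g : R -> R) :
  Rintegral (@lebesgue_measure R) setT (fun t => - g t) =
  - Rintegral (@lebesgue_measure R) setT g.
Proof.
rewrite /Rintegral.
have -> : (fun t => (- g t)%:E) = (\- (fun t => (g t)%:E))%E.
  by apply/funext => t; rewrite EFinN.
rewrite [in LHS]integralE [in RHS]integralE funeposN funenegN.
have A0 : (0 <= \int[@lebesgue_measure R]_x (fun t => (g t)%:E)^\+ x)%E.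
  by apply: integral_ge0 => x _; rewrite funeposE le_max lexx orbT.
have B0 : (0 <= \int[@lebesgue_measure R]_x (fun t => (g t)%:E)^\- x)%E.
  by apply: integral_ge0 => x _; rewrite funenegE le_max lexx orbT.
move: A0 B0.
case: (\int[@lebesgue_measure R]_x (fun t => (g t)%:E)^\+ x)%E => [a| |];
case: (\int[@lebesgue_measure R]_x (fun t => (g t)%:E)^\- x)%E => [b| |] //=.
- by move=> _ _; rewrite opprB.
- by rewrite oppr0.
- by rewrite oppr0.
- by rewrite oppr0.
Qed.

Lemma iint_opp n (h : V n -> R) : iint (fun y => - h y) = - iint h.
Proof.
elim: n h => [|n IH] h //=.
rewrite -Rint_opp; congr (Rintegral _ _ _); apply/funext => t.
exact: IH.
Qed.

Lemma geo_small (q A B : R) : 0 <= q < 1 -> 0 < B ->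
  \forall N \near \oo, A * q ^+ N <= B.
Proof.
move=> /andP[q0 q1] B0.
have qn : `|q| < 1 by rewrite ger0_norm.
have /cvgrPdist_lt /(_ (B / (`|A| + 1))) := cvg_expr qn.
have A1 : 0 < `|A| + 1 by rewrite ltr_wpDl.
move=> /(_ (divr_gt0 B0 A1)); apply: filterS => N.
rewrite sub0r normrN ger0_norm ?exprn_ge0// => h.
apply: le_trans (ler_norm _) _; rewrite normrM (ger0_norm (exprn_ge0 _ q0)).
apply: (le_trans (y := (`|A| + 1) * q ^+ N)).
  by rewrite ler_wpM2r ?exprn_ge0// lerDl.
by rewrite mulrC -ler_pdivlMr// ltW.
Qed.

Lemma powle (a b : R) N : 0 <= a -> a <= b -> a ^+ N <= b ^+ N.
Proof.
move=> a0 ab; apply: lerXn2r; rewrite ?nnegrE//; exact: le_trans ab.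
Qed.
End M1.
Lemma key_pos (R : realType) (n d : nat)
  (u : 'I_d -> 'I_n -> int) (c : 'I_d -> int)
  (f g : 'rV[R]_n -> R) (x : 'rV[R]_n) (y0 : 'rV[R]_n) :
  compact (polytope R u c) -> (forall i, 0 < ldist u c i y0) ->
  (exists F : 'rV[R]_n -> R, continuous F /\ forall y, polytope R u c y -> F y = f y) ->
  smooth_on (polytope R u c) g ->
  polytope R u c x ->
  0 < f x ->
  ~ supp_on (polytope R u c) g x ->
  exists2 C : R, 0 < C &
    \forall N \near \oo,
      `| int_on (polytope R u c) (fun y => weight u c N x y * g y) |
        <= expR (- (C * N%:R))
           * `| int_on (polytope R u c) (fun y => weight u c N x y * f y) |.
Proof.
move=> cD hy0 [F [Fc Ff]] [G [Gs Gg]] Dx fx0 ns.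
set D := polytope R u c.
set P := Psi u c x x.
have P0 : 0 < P := Psi_x_gt0 Dx.
have [S S0 DS] := compact_in_ball x cD.
have [rg rg0 gv] := supp_vanish ns.
have [thg /andP[thg0 thg1] hthg] := Psi_gap cD Dx rg0.
have Gc : continuous G := Gs 0%N.
have [Kg hKg] := bound_on cD Gc.
have Fx : F x = f x := Ff x Dx.
have [r1 r10 hr1] : exists2 r, 0 < r & forall y, ball x r y -> f x / 2 < F y.
  by apply: ball_gt; [exact: Fc|rewrite Fx; lra].
have [th1 /andP[th10 th11] hth1] := Psi_gap cD Dx r10.
have [Kf hKf] := bound_on cD Fc.
set M := Num.max thg th1.
have M0 : 0 <= M by rewrite le_max thg0.
have M1 : M < 1 by rewrite gt_max thg1 th11.
set th' := (1 + M) / 2.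
set th2 := (M + th') / 2.
have th'0 : 0 < th' by rewrite /th'; lra.
have th'1 : th' < 1 by rewrite /th'; lra.
have th20 : 0 < th2 by rewrite /th2 /th'; lra.
have th2' : th2 < th' by rewrite /th2 /th'; lra.
have Mth2 : M < th2 by rewrite /th2 /th'; lra.
have [r2 r20 hr2] : exists2 r, 0 < r & forall y, ball x r y -> th' * P < Psi u c x y.
  by apply: ball_gt; [exact: Psi_cont|rewrite -[X in _ < X]mul1r ltr_pM2r].
have rm : 0 < Num.min r1 r2 by rewrite lt_min r10 r20.
have [q [rho rho0 hq]] := inner_ball Dx hy0 rm.
set C := ln (th' / th2).
have C0 : 0 < C by apply: ln_gt0; rewrite ltr_pdivlMr// mul1r.
exists C => //.
set W := (rho *+ 2) ^+ n.
set Vb := (S *+ 2) ^+ n.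
set Z := cc n (rho *+ 2) (S *+ 2).
have W0 : 0 < W by rewrite exprn_gt0// mulrn_wgt0.
have Kg0 : 0 <= Kg by apply: le_trans (hKg x Dx).
have Kf0 : 0 <= Kf by apply: le_trans (hKf x Dx).
have E1 := @geo_small R (thg / th2) (Kg * Vb) (f x / 4 * W).
have E2 := @geo_small R (th1 / th') (Kf * Z) (f x / 4 * W).
have B0 : 0 < f x / 4 * W by rewrite mulr_gt0// divr_gt0.
have q1 : 0 <= thg / th2 < 1.
  apply/andP; split; first by rewrite divr_ge0// ltW.
  by rewrite ltr_pdivrMr// mul1r; apply: le_lt_trans Mth2; rewrite le_max lexx.
have q2 : 0 <= th1 / th' < 1.
  apply/andP; split; first by rewrite divr_ge0// ltW.
  rewrite ltr_pdivrMr// mul1r; apply: le_lt_trans (lt_trans Mth2 th2').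
  by rewrite le_max lexx orbT.
near=> N.
have e1 : Kg * Vb * (thg / th2) ^+ N <= f x / 4 * W by near: N; exact: E1.
have e2 : Kf * Z * (th1 / th') ^+ N <= f x / 4 * W by near: N; exact: E2.
have PsiN y : polytope R u c y -> 0 <= Psi u c x y ^+ N by move=> _; rewrite exprn_ge0// Psi_ge0.
have hB (h : 'rV[R]_n -> R) y : ~ cube x S y -> \1_D y * h y = 0.
  move=> ncube; rewrite indicE memNset ?mul0r// => Dy; apply: ncube.
  by apply/cube_ball => //; exact: DS.
set eg := Kg * (thg * P) ^+ N.
have eg0 : 0 <= eg by rewrite mulr_ge0// exprn_ge0// mulr_ge0// ltW.
have hupg : forall y, `|\1_D y * (weight u c N x y * g y)| <= eg.
  move=> y; rewrite indicE; case: (pselect (D y)) => Dy; last first.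
    by rewrite memNset// mul0r normr0.
  rewrite mem_set// mul1r weightE// normrM -Gg// ger0_norm ?PsiN//.
  case: (pselect (ball x rg y)) => By.
    by rewrite Gg// gv// normr0 mulr0.
  rewrite mulrC; apply: ler_pM => //; first by rewrite exprn_ge0// Psi_ge0.
    exact: hKg.
  by apply: powle; [exact: Psi_ge0|exact: hthg].
have Ig : `|int_on D (fun y => weight u c N x y * g y)| <= eg * Vb.
  have hlog : forall y, - eg <= \1_D y * (weight u c N x y * g y).
    by move=> y; have := hupg y; rewrite ler_norml => /andP[].
  have [_ _ h3] := @iint_bound R n (fun y => \1_D y * (weight u c N x y * g y))
    x x 0 S (- eg) eg eg (lexx 0) (ltW S0) eg0 (hB _) hlog hupg (fun y _ => hlog y).
  exact: h3.
set ef := Kf * (th1 * P) ^+ N.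
set mf := f x / 2 * (th' * P) ^+ N.
have ef0 : 0 <= ef by rewrite mulr_ge0// exprn_ge0// mulr_ge0// ltW.
have hupf : forall y, `|\1_D y * (weight u c N x y * f y)| <= Kf * P ^+ N.
  move=> y; rewrite indicE; case: (pselect (D y)) => Dy; last first.
    by rewrite memNset// mul0r normr0 mulr_ge0// exprn_ge0// ltW.
  rewrite mem_set// mul1r weightE// normrM -Ff// ger0_norm ?PsiN// mulrC.
  apply: ler_pM => //; first by rewrite exprn_ge0// Psi_ge0.
    exact: hKf.
  by apply: powle; [exact: Psi_ge0|exact: Psi_le].
have hlof : forall y, - ef <= \1_D y * (weight u c N x y * f y).
  move=> y; rewrite indicE; case: (pselect (D y)) => Dy; last first.
    by rewrite memNset// mul0r oppr_le0.
  rewrite mem_set// mul1r weightE//.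
  case: (pselect (ball x r1 y)) => By.
    apply: le_trans (_ : 0 <= _); first by rewrite oppr_le0.
    rewrite mulr_ge0 ?PsiN// -Ff//; have := hr1 y By; lra.
  have : `|Psi u c x y ^+ N * f y| <= ef.
    rewrite normrM -Ff// ger0_norm ?PsiN// mulrC.
    apply: ler_pM => //; first by rewrite exprn_ge0// Psi_ge0.
      exact: hKf.
    by apply: powle; [exact: Psi_ge0|exact: hth1].
  by rewrite ler_norml => /andP[].
have hQf : forall y, cube q rho y -> mf <= \1_D y * (weight u c N x y * f y).
  move=> y /(cube_ball _ _ rho0) /hq [Dy Bxy].
  have B1 : ball x r1 y by apply: le_ball Bxy; rewrite ge_min lexx.
  have B2 : ball x r2 y by apply: le_ball Bxy; rewrite ge_min lexx orbT.
  rewrite indicE mem_set// mul1r weightE// /mf mulrC -(Ff y Dy).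
  apply: ler_pM.
  - by rewrite exprn_ge0// mulr_ge0// ltW.
  - lra.
  - apply: powle; first by rewrite mulr_ge0// ltW.
    exact/ltW/hr2.
  - exact/ltW/hr1.
have If : mf * W - ef * Z <= int_on D (fun y => weight u c N x y * f y).
  have [h1 _ _] := @iint_bound R n (fun y => \1_D y * (weight u c N x y * f y))
    q x rho S mf ef (Kf * P ^+ N) (ltW rho0) (ltW S0) ef0 (hB _) hlof hupf hQf.
  exact: h1.
have eC : expR (- (C * N%:R)) = (th2 / th') ^+ N.
  rewrite mulrC -mulrN expRM_natl /C expRN lnK; first by rewrite invf_div.
  by rewrite posrE divr_gt0.
rewrite eC.
have hr0 : 0 <= (th2 / th') ^+ N by rewrite exprn_ge0// divr_ge0// ltW.
apply: le_trans Ig _.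
apply: (le_trans (y := (th2 / th') ^+ N * (mf * W - ef * Z))); last first.
  by rewrite ler_wpM2l// (le_trans If)// ler_norm.
set X := (thg / th2) ^+ N.
set Y := (th1 / th') ^+ N.
set T := (th2 * P) ^+ N.
have T0 : 0 <= T by rewrite exprn_ge0// mulr_ge0// ltW.
have h1 : (thg * P) ^+ N = X * T.
  by rewrite /X /T -exprMn; congr (_ ^+ _); field; rewrite gt_eqF.
have h2 : (th2 / th') ^+ N * (th' * P) ^+ N = T.
  by rewrite /T -exprMn; congr (_ ^+ _); field; rewrite gt_eqF.
have h3 : (th2 / th') ^+ N * (th1 * P) ^+ N = Y * T.
  by rewrite /Y /T -exprMn -exprMn; congr (_ ^+ _); field; rewrite gt_eqF.
have -> : (th2 / th') ^+ N * (mf * W - ef * Z) =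
    f x / 2 * W * ((th2 / th') ^+ N * (th' * P) ^+ N)
    - Kf * Z * ((th2 / th') ^+ N * (th1 * P) ^+ N).
  by rewrite /mf /ef; ring.
rewrite h2 h3 /eg h1.
have -> : Kg * (X * T) * Vb = (Kg * Vb * X) * T by ring.
have -> : f x / 2 * W * T - Kf * Z * (Y * T) = (f x / 2 * W - Kf * Z * Y) * T by ring.
apply: ler_wpM2r => //.
move: e1 e2; rewrite -/X -/Y => e1 e2.
have : f x / 4 * W + f x / 4 * W = f x / 2 * W by field.
lra.
Unshelve. all: by end_near. Qed.

Theorem theorem4p2 (R : realType) (n d : nat)
  (u : 'I_d -> 'I_n -> int) (c : 'I_d -> int)
  (f g : 'rV[R]_n -> R) (x : 'rV[R]_n) :
  Delzant R u c ->
  smooth_on (polytope R u c) f ->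
  smooth_on (polytope R u c) g ->
  polytope R u c x ->
  f x != 0 ->
  ~ supp_on (polytope R u c) g x ->
  exists2 C : R, 0 < C &
    \forall N \near \oo,
      `| int_on (polytope R u c) (fun y => weight u c N x y * g y) |
        <= expR (- (C * N%:R))
           * `| int_on (polytope R u c) (fun y => weight u c N x y * f y) |.
Proof.
move=> [cD [y0 hy0] _ _ _] [F [Fs Ff]] hg Dx fx0 ns.
have Fc : continuous F := Fs 0%N.
case: (ltgtP (f x) 0) => [fn|fp|fz]; last by rewrite fz eqxx in fx0.
- have [C C0 HC] := @key_pos R n d u c (fun y => - f y) g x y0 cD hy0
    (ex_intro _ (fun y => - F y) (conj (fun y => @continuousN _ _ _ F y (Fc y))
       (fun y Dy => congr1 -%R (Ff y Dy)))) hg Dx (ltac:(by rewrite oppr_gt0)) ns.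
  exists C => //; move: HC; apply: filterS => N.
  suff -> : int_on (polytope R u c) (fun y => weight u c N x y * f y) =
    - int_on (polytope R u c) (fun y => weight u c N x y * - f y) by rewrite normrN.
  rewrite /int_on -iint_opp; congr iint; apply/funext => y.
  by rewrite mulrN mulrN opprK.
- exact: (@key_pos R n d u c f g x y0 cD hy0 (ex_intro _ F (conj Fc Ff)) hg Dx fp ns).
Qed.
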